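(* The free semigroup $\{a,b\}^+$ on two generators is neither left fairly amenable nor right fairly amenable.
   Context: For a semigroup $U$, $s\in U$, $A\subseteq U$: $s$ acts injectively on the left (right) of $A$ if $x\mapsto sx$ ($x\mapsto xs$) is injective on $A$. A finitely-additive probability measure on $U$ is $\mu:\mathcal P(U)\to[0,1]$ with $\mu(U)=1$, additive on disjoint sets; it is left fairly invariant if $\mu(sA)=\mu(A)$ whenever $s$ acts injectively on the left of $A$ (right fairly invariant analogously with $As$). $U$ is left (right) fairly amenable if such a measure exists. *)

(* Defs.v *)
From Stdlib Require Import Reals List.
Import ListNotations.
Open Scope R_scope.

(* A finitely-additive probability measure on P(U). Since sets are
   represented as predicates, we also require mu to respect extensional
   equality of sets (as a genuine function on P(U) does). *)
Definition fa_prob_measure {U : Type} (mu : (U -> Prop) -> R) : Prop :=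
  (forall A, 0 <= mu A <= 1) /\
  (forall A B, (forall x, A x <-> B x) -> mu A = mu B) /\
  mu (fun _ => True) = 1 /\
  (forall A B, (forall x, ~ (A x /\ B x)) ->
     mu (fun x => A x \/ B x) = mu A + mu B).

Definition inj_left {U : Type} (op : U -> U -> U) (s : U) (A : U -> Prop) : Prop :=
  forall x y, A x -> A y -> op s x = op s y -> x = y.
Definition inj_right {U : Type} (op : U -> U -> U) (s : U) (A : U -> Prop) : Prop :=
  forall x y, A x -> A y -> op x s = op y s -> x = y.

Definition lmul_set {U : Type} (op : U -> U -> U) (s : U) (A : U -> Prop) : U -> Prop :=
  fun y => exists x, A x /\ y = op s x.
Definition rmul_set {U : Type} (op : U -> U -> U) (s : U) (A : U -> Prop) : U -> Prop :=
  fun y => exists x, A x /\ y = op x s.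

Definition left_fairly_invariant {U : Type} (op : U -> U -> U) (mu : (U -> Prop) -> R) : Prop :=
  forall s A, inj_left op s A -> mu (lmul_set op s A) = mu A.
Definition right_fairly_invariant {U : Type} (op : U -> U -> U) (mu : (U -> Prop) -> R) : Prop :=
  forall s A, inj_right op s A -> mu (rmul_set op s A) = mu A.

Definition left_fairly_amenable {U : Type} (op : U -> U -> U) : Prop :=
  exists mu, fa_prob_measure mu /\ left_fairly_invariant op mu.
Definition right_fairly_amenable {U : Type} (op : U -> U -> U) : Prop :=
  exists mu, fa_prob_measure mu /\ right_fairly_invariant op mu.

(* The free semigroup {a,b}^+ : nonempty words over the alphabet bool
   (a = true, b = false), a word being (first letter, remaining letters). *)
Definition FS2 : Type := (bool * list bool)%type.
Definition fs2_mul (x y : FS2) : FS2 := (fst x, snd x ++ fst y :: snd y).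

(* Main.v *)
Require Import Defs.
From Stdlib Require Import Reals List Lra.
Import ListNotations.

Theorem mainTheorem19 :
  ~ left_fairly_amenable fs2_mul /\ ~ right_fairly_amenable fs2_mul.
Proof.
  split.
  - intros [mu [[Hb [_ [HT Hadd]]] Hinv]].
    assert (Hinj : forall c, inj_left fs2_mul (c, []) (fun _ => True)).
    { intros c [x1 x2] [y1 y2] _ _ H; unfold fs2_mul in H; simpl in H.
      inversion H; reflexivity. }
    assert (E1 := Hinv _ _ (Hinj true)). assert (E2 := Hinv _ _ (Hinj false)).
    assert (D : forall x, ~ (lmul_set fs2_mul (true, []) (fun _ => True) x /\
                            lmul_set fs2_mul (false, []) (fun _ => True) x)).
    { intros x [[y [_ Hy]] [z [_ Hz]]]. subst x. unfold fs2_mul in Hz.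
      simpl in Hz. inversion Hz. }
    assert (Hs := Hadd _ _ D). destruct (Hb (fun x => lmul_set fs2_mul (true, []) (fun _ => True) x \/
          lmul_set fs2_mul (false, []) (fun _ => True) x)). lra.
  - intros [mu [[Hb [_ [HT Hadd]]] Hinv]].
    assert (Hinj : forall c, inj_right fs2_mul (c, []) (fun _ => True)).
    { intros c [x1 x2] [y1 y2] _ _ H; unfold fs2_mul in H; simpl in H.
      inversion H as [[H1 H2]]. apply app_inj_tail in H2. destruct H2; subst; reflexivity. }
    assert (E1 := Hinv _ _ (Hinj true)). assert (E2 := Hinv _ _ (Hinj false)).
    assert (D : forall x, ~ (rmul_set fs2_mul (true, []) (fun _ => True) x /\
                            rmul_set fs2_mul (false, []) (fun _ => True) x)).
    { intros x [[y [_ Hy]] [z [_ Hz]]]. subst x. unfold fs2_mul in Hz.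
      simpl in Hz. inversion Hz as [[H1 H2]]. apply app_inj_tail in H2.
      destruct H2 as [_ H3]; discriminate. }
    assert (Hs := Hadd _ _ D). destruct (Hb (fun x => rmul_set fs2_mul (true, []) (fun _ => True) x \/
          rmul_set fs2_mul (false, []) (fun _ => True) x)). lra.
Qed.
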